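(* Let $\Gamma$ be a finite graph with $m$ vertices endowed with a total order $\prec$ on $V(\Gamma)$, let $p:\tilde\Gamma\to\Gamma$ be a covering, and let $F$ be a finite nonempty subset of $V(\tilde\Gamma)$. Then there exists an induced subgraph $\Lambda$ of $\tilde\Gamma$ with $|V(\Lambda)|\leqslant|F|\cdot2^{m-1}$ such that $\phi=p|_\Lambda:\Lambda\to\Gamma$ has SIPL for $F$ (with respect to $\prec$). Furthermore, if the induced subgraph of $\tilde\Gamma$ on $F$ is connected, then $\Lambda$ can be chosen to be connected.
   Context: All graphs are undirected and simplicial ($\tilde\Gamma$ may be infinite). A map of graphs sends vertices to vertices and adjacent vertices to adjacent vertices. A covering $p:\tilde\Gamma\to\Gamma$ is a surjective map of graphs whose restriction to the set of neighbours of each vertex $v'$ is a bijection onto the set of neighbours of $p(v')$. A path in $\Gamma$ is a tuple $(v_0,\dots,v_k)$ of pairwise distinct vertices with $\{v_i,v_{i+1}\}$ an edge for all $i$; it is semi-induced (w.r.t. $\prec$) if $\{v_i,v_j\}$ is not an edge whenever $j\ge i+2$ and $v_j\prec v_{i+1}$. For a map of graphs $\phi:\Lambda\to\Gamma$, a lift of $(v_0,\dots,v_k)$ is a path $(v_0',\dots,v_k')$ in $\Lambda$ with $\phi(v_i')=v_i$. $\phi$ has SIPL for $F\subseteq V(\Lambda)$ if for each $v'\in F$ every semi-induced path in $\Gamma$ starting at $\phi(v')$ has a lift to $\Lambda$ starting at $v'$. *)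

(* Defs.v *)
From mathcomp Require Import all_boot.
From Stdlib Require List.
Set Implicit Arguments. Unset Strict Implicit. Unset Printing Implicit Defensive.

(* Conventions.
   - The finite graph Gamma: vertex type V0 : finType, adjacency e : rel V0
     (assumed symmetric and irreflexive = simple graph).
   - The possibly infinite graph tilde-Gamma: vertex type V : Type with a
     Prop-valued adjacency E (assumed symmetric and irreflexive).
   - A path (v_0,...,v_k) is a nonempty list. *)

Section GraphDefs.
Variables (V0 : finType) (e : rel V0) (V : Type) (E : V -> V -> Prop).

Definition simple_graph0 : Prop := symmetric e /\ irreflexive e.
Definition simple_graph : Prop :=
  (forall x y, E x y -> E y x) /\ (forall x, ~ E x x).

Definition strict_total_order (lt : rel V0) : Prop :=
  irreflexive lt /\ transitive lt /\ (forall x y, x != y -> lt x y || lt y x).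

Definition covering (p : V -> V0) : Prop :=
  (forall u, exists v', p v' = u) /\
  (forall v' w', E v' w' -> e (p v') (p w')) /\
  (forall v' w1 w2, E v' w1 -> E v' w2 -> p w1 = p w2 -> w1 = w2) /\
  (forall v' u, e (p v') u -> exists w', E v' w' /\ p w' = u).

Definition is_path0 (s : seq V0) : Prop :=
  s <> [::] /\ uniq s /\
  (forall i x0, i.+1 < size s -> e (nth x0 s i) (nth x0 s i.+1)).

Definition semi_induced (lt : rel V0) (s : seq V0) : Prop :=
  is_path0 s /\
  forall i j x0, i.+2 <= j -> j < size s ->
    lt (nth x0 s j) (nth x0 s i.+1) -> ~~ e (nth x0 s i) (nth x0 s j).

Fixpoint E_chain (l : list V) : Prop :=
  match l with
  | x :: ((y :: _) as l') => E x y /\ E_chain l'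
  | _ => True
  end.

Definition lift_in (p : V -> V0) (L : V -> Prop) (s : seq V0) (v' : V)
    (l : list V) : Prop :=
  ohead l = Some v' /\ List.NoDup l /\ E_chain l /\
  (forall x, List.In x l -> L x) /\ List.map p l = s.

Definition SIPL (lt : rel V0) (p : V -> V0) (L : V -> Prop) (F : list V) : Prop :=
  forall v', List.In v' F -> L v' /\
    forall s, semi_induced lt s -> ohead s = Some (p v') ->
      exists l, lift_in p L s v' l.

Definition connected_on (S : V -> Prop) : Prop :=
  forall x y, S x -> S y ->
    exists l : list V, ohead l = Some x /\ last x l = y /\
      E_chain l /\ (forall z, List.In z l -> S z).

End GraphDefs.

(* Main.v *)
Require Import Defs.
From mathcomp Require Import all_boot.
From Stdlib Require List.
From mathcomp Require Import zify.
From Stdlib Require Import ClassicalEpsilon Classical.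
Set Implicit Arguments. Unset Strict Implicit. Unset Printing Implicit Defensive.

Section Aux.
Variables (V0 : finType) (e : rel V0) (lt : rel V0) (V : Type) (E : V -> V -> Prop) (p : V -> V0).

Lemma Lmap_map (A B : Type) (f : A -> B) (l : list A) : List.map f l = map f l.
Proof. by elim: l => //= a l ->. Qed.

Lemma Llen_size (A : Type) (l : list A) : List.length l = size l.
Proof. by elim: l => //= a l ->. Qed.

Lemma In_mem (T : eqType) (x : T) (s : seq T) : List.In x s <-> x \in s.
Proof.
elim: s => [|a s IH] //=; rewrite in_cons; split.
- by case=> [->|/IH ->]; rewrite ?eqxx ?orbT.
- by case/orP=> [/eqP->|/IH]; auto.
Qed.

Definition lifts (s : seq V0) (v' : V) (l : list V) :=
  ohead l = Some v' /\ E_chain E l /\ map p l = s.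

Hypothesis cov : covering e E p.

Lemma lift_exists s v' : path e (p v') s -> exists l, lifts (p v' :: s) v' l.
Proof.
elim: s v' => [|a s IH] v' /=.
  by move=> _; exists [:: v'].
case/andP=> ea ps.
have [w' [Ew pw]] := (proj2 (proj2 (proj2 cov))) v' a ea.
rewrite -pw in ps; have [l' [h' [c' m']]] := IH w' ps.
exists (v' :: l'); split => //; split.
  by case: l' h' c' m' => //= b l' [->].
by rewrite /= m' pw.
Qed.

Lemma lift_unique s v' l1 l2 : lifts s v' l1 -> lifts s v' l2 -> l1 = l2.
Proof.
elim: l1 s v' l2 => [|a t1 IH] s v' [|b t2] //=; first by move=> [].
  by move=> _ [].
move=> [h1 [c1 m1]] [h2 [c2 m2]].
case: h1 => ha; case: h2 => hb; subst a b.
rewrite -m2 in m1; case: m1 => m1.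
move: c1 c2 m1; case: t1 IH => [|a1 r1] IH; case: t2 {m2} => [|b1 r2] //= c1 c2 m1; try by [].
have ab : a1 = b1.
  case: m1 => pab _; exact: (proj1 (proj2 (proj2 cov))) v' a1 b1 (proj1 c1) (proj1 c2) pab.
subst b1; congr (_ :: _).
apply: (IH (map p (a1 :: r1)) a1).
  by split => //; split => //; exact: proj2 c1.
by split => //; split; [exact: proj2 c2|symmetry; exact: m1].
Qed.

Lemma E_chain_take (l : list V) n : E_chain E l -> E_chain E (take n l).
Proof.
elim: l n => [|a t IH] [|n] //= c.
case: t IH c => [|b r] IH //= [Eab c].
case: n => [|n] //=; split => //; exact: (IH n.+1).
Qed.

Lemma lifts_take s v' l n : lifts s v' l -> lifts (take n.+1 s) v' (take n.+1 l).
Proof.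
move=> [h [c m]]; split; last split.
- by case: l h {c m}.
- exact: E_chain_take.
- by rewrite map_take m.
Qed.

Lemma uniq_NoDup (l : list V) : uniq (map p l) -> List.NoDup l.
Proof.
elim: l => [|a t IH] /=; first by constructor.
case/andP=> na u; constructor; last exact: IH.
move=> ia; move/negP: na; apply.
elim: t ia {IH u} => //= b t IH; rewrite in_cons.
by case=> [->|/IH ->]; rewrite ?eqxx ?orbT.
Qed.

Lemma In_last (l : list V) x0 z : List.In z l ->
  exists k, k < size l /\ last x0 (take k.+1 l) = z.
Proof.
elim: l x0 => [|a t IH] x0 //=; case=> [->|/(IH a) [k [kl lk]]].
  by exists 0; rewrite take0.
by exists k.+1.
Qed.

End Aux.

Section Semi.
Variables (V0 : finType) (e : rel V0) (lt : rel V0).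

Lemma si_path x t : semi_induced e lt (x :: t) -> path e x t.
Proof.
move=> [[_ [_ h]] _]; apply/(pathP x) => i il; exact: (h i x).
Qed.

Lemma si_uniq s : semi_induced e lt s -> uniq s.
Proof. by move=> [[_ [u _]] _]. Qed.

Lemma si_behead x a r : semi_induced e lt (x :: a :: r) -> semi_induced e lt (a :: r).
Proof.
move=> [[_ [u h]] hs]; split; first split => //.
  split; first by case/andP: u.
  move=> i x0 il; exact: (h i.+1 x0).
move=> i j x0 ij jl; exact: (hs i.+1 j.+1 x0).
Qed.

Lemma si_take s n : semi_induced e lt s -> semi_induced e lt (take n.+1 s).
Proof.
move=> [[ne [u h]] hs]; split; first split.
- by case: s ne {u h hs}.
- split; first exact: take_uniq.
  move=> i x0; rewrite size_take => il.
  have [il' il''] : i.+1 < n.+1 /\ i.+1 < size s by move: il; case: ifP => /=; lia.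
  rewrite !nth_take //; try lia; exact: h.
- move=> i j x0 ij; rewrite size_take => jl.
  have [jn jn'] : j < n.+1 /\ j < size s by move: jl; case: ifP => /=; lia.
  rewrite !nth_take //; try lia; exact: hs.
Qed.

Lemma si_min x a r y : semi_induced e lt (x :: a :: r) -> y \in r -> lt y a -> ~~ e x y.
Proof.
move=> [_ hs] yr ly.
have := hs 0 (index y r).+2 y isT; rewrite /= nth_index //; apply => //.
by rewrite !ltnS index_mem.
Qed.

Hypothesis lto : strict_total_order lt.

Lemma si_unique s1 s2 : semi_induced e lt s1 -> semi_induced e lt s2 ->
  ohead s1 = ohead s2 -> perm_eq s1 s2 -> s1 = s2.
Proof.
elim: s1 s2 => [|x t1 IH] s2; first by move=> [[]].
case: s2 => [|y t2]; first by move=> _ [[]].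
move=> h1 h2 [xy]; subst y; rewrite perm_cons => pt.
case: t1 IH h1 pt => [|a r1] IH h1 pt.
  by move: pt; rewrite perm_sym => /perm_nilP ->.
case: t2 h2 pt => [|b r2] h2 pt; first by have := perm_size pt.
have ab : a = b.
  case: (eqVneq a b) => // nab; exfalso.
  have xa : e x a by have := si_path h1; case/andP.
  have xb : e x b by have := si_path h2; case/andP.
  case/orP: ((proj2 (proj2 lto)) a b nab) => l.
  - have : a \in r2.
      have : a \in b :: r2 by rewrite -(perm_mem pt) mem_head.
      by rewrite in_cons (negbTE nab).
    by move/(si_min h2) => /(_ l); rewrite xa.
  - have : b \in r1.
      have : b \in a :: r1 by rewrite (perm_mem pt) mem_head.
      by rewrite in_cons eq_sym (negbTE nab).
    by move/(si_min h1) => /(_ l); rewrite xb.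
subst b; congr (_ :: _); apply: IH => //; [exact: si_behead h1|exact: si_behead h2].
Qed.

End Semi.

Section Reach.
Variables (V : Type) (E : V -> V -> Prop).

Inductive Rch (Q : V -> Prop) : V -> V -> Prop :=
| Rrefl a : Q a -> Rch Q a a
| Rstep a b c : Q a -> E a b -> Rch Q b c -> Rch Q a c.

Lemma Rch_Qr Q a c : Rch Q a c -> Q c.
Proof. by elim. Qed.

Lemma Rch_back Q a b c : Rch Q a b -> E b c -> Q c -> Rch Q a c.
Proof.
elim=> [x qx|x y z qx exy _ IH] ebc qc.
  by apply: (Rstep qx ebc); apply: Rrefl.
exact: (Rstep qx exy (IH ebc qc)).
Qed.

Lemma Rch_sym Q a b : (forall x y, E x y -> E y x) -> Rch Q a b -> Rch Q b a.
Proof.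
move=> sym; elim=> [x qx|x y z qx exy _ IH]; first exact: Rrefl.
exact: (Rch_back IH (sym _ _ exy) qx).
Qed.

Lemma Rch_trans Q a b c : Rch Q a b -> Rch Q b c -> Rch Q a c.
Proof.
elim=> // x y z qx exy _ IH /IH; exact: Rstep.
Qed.

Lemma Rch_mono (Q Q' : V -> Prop) a b : (forall x, Q x -> Q' x) -> Rch Q a b -> Rch Q' a b.
Proof.
move=> QQ; elim=> [x qx|x y z qx exy _ IH]; first exact/Rrefl/QQ.
exact: (Rstep (QQ _ qx) exy IH).
Qed.

Lemma Rch_list Q a c : Rch Q a c -> exists l : list V, ohead l = Some a /\ last a l = c /\
      E_chain E l /\ (forall z, List.In z l -> Q z).
Proof.
elim=> [x qx|x y z qx exy _ [l [h [lz [ch al]]]]].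
  by exists [:: x]; split => //; split => //; split => // w [<-|].
exists (x :: l); case: l h lz ch al => [|b l] /= h; [discriminate h|injection h as hb; subst y => lz ch al].
split => //; split => //; split => // w [<-|[<-|]] //; auto.
Qed.

Lemma list_Rch Q (l : list V) a c : ohead l = Some a -> last a l = c ->
  E_chain E l -> (forall z, List.In z l -> Q z) -> Rch Q a c.
Proof.
elim: l a => [|x t IH] a //= [<-] lc ch al.
case: t IH lc ch al => [|b r] IH /= lc ch al.
  by rewrite -lc; apply: Rrefl; apply: al; left.
apply: (Rstep (al x (or_introl erefl)) (proj1 ch)).
apply: IH => //; [exact: proj2 ch| by move=> z zi; apply: al; right].
Qed.

End Reach.

Theorem proposition3p10 (V0 : finType) (e : rel V0) (lt : rel V0)
  (V : Type) (E : V -> V -> Prop) (p : V -> V0) (F : list V) :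
  simple_graph0 e -> simple_graph E -> strict_total_order lt ->
  covering e E p ->
  F <> nil -> List.NoDup F ->
  exists L : list V,
    List.NoDup L /\
    (List.length L <= List.length F * 2 ^ (#|V0| - 1))%N /\
    SIPL e E lt p (fun x => List.In x L) F /\
    (connected_on E (fun x => List.In x F) -> connected_on E (fun x => List.In x L)).
Proof.
move=> _ sg lto cov _ _.
pose P v' (S : {set V0}) w := exists s l, semi_induced e lt s /\ ohead s = Some (p v') /\
   [set x in behead s] = S /\ lifts E p s v' l /\ last v' l = w.
pose P' v' S w := P v' S w \/ (~ (exists w, P v' S w) /\ w = v').
pose wf v' S := epsilon (inhabits v') (P' v' S).
have wfP v' S : P' v' S (wf v' S).
  apply: epsilon_spec.
  case: (classic (exists w, P v' S w)) => [[w Pw]|nP]; first by exists w; left.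
  by exists v'; right.
pose L0 := List.flat_map (fun v' => List.map (wf v') (enum (powerset [set~ p v']))) F.
pose dec := fun x y : V => excluded_middle_informative (x = y).
pose L := List.nodup dec L0.
have inL x : List.In x L <-> List.In x L0 by apply: List.nodup_In.
have lenL0 : List.length L0 = (List.length F * 2 ^ (#|V0| - 1))%N.
  rewrite /L0; clear L inL L0; elim: F => [|v F IH] //=.
  rewrite List.length_app List.length_map IH Llen_size -cardE card_powerset cardsC1.
  by rewrite subn1 mulSn.
have key v' s l : List.In v' F -> semi_induced e lt s -> ohead s = Some (p v') ->
    lifts E p s v' l -> forall z, List.In z l -> List.In z L0.
  move=> vF si hs hl z /(In_last v') [k [kl lk]].
  case: s si hs hl => [|x t] //= si [xv] hl; subst x.
  have hlk := lifts_take k hl.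
  have sik := si_take k si.
  set Sk := [set x in take k t].
  have SkP : Sk \in powerset [set~ p v'].
    rewrite powersetE; apply/subsetP => y; rewrite !inE => yt.
    have := si_uniq si; rewrite /= => /andP [nt _].
    by apply/eqP => yv; subst y; move: nt; rewrite (mem_take yt).
  have wz : wf v' Sk = z.
    case: (wfP v' Sk) => [[s'' [l'' [si'' [h'' [S'' [hl'' <-]]]]]]|[nP _]]; last first.
      exfalso; apply: nP; exists z; exists (take k.+1 (p v' :: t)), (take k.+1 l).
      by split => //; split => //; split => //; split.
    case: s'' si'' h'' S'' hl'' => [|x t''] //= si'' [xv] S'' hl''; subst x.
    have ss : p v' :: t'' = take k.+1 (p v' :: t).
      apply: (si_unique lto si'' sik) => //.
      rewrite /= perm_cons; apply: uniq_perm.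
      - by have := si_uniq si''; case/andP.
      - by have := si_uniq sik; case/andP.
      move=> y; have := congr1 (fun S : {set V0} => y \in S) S''.
      by rewrite /Sk !inE.
    rewrite ss in hl''.
    by rewrite (lift_unique cov hl'' hlk).
  rewrite -wz; apply/List.in_flat_map; exists v'; split => //.
  by apply: List.in_map; apply/In_mem; rewrite mem_enum.
have FL v' : List.In v' F -> List.In v' L.
  move=> vF; apply/inL; apply: (key v' [:: p v'] [:: v']) => //; last by left.
    split.
      split => //; split => //; by move=> [|i] x0.
    by move=> i [|[|j]] x0.
exists L; split; first exact: List.NoDup_nodup.
split.
  rewrite -lenL0; apply/leP; apply: List.NoDup_incl_length; first exact: List.NoDup_nodup.
  by move=> x /inL.
split.
  move=> v' vF; split; first exact: FL.
  case=> [|x t] //= si [xv]; subst x.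
  have [l hl] := lift_exists cov (si_path si).
  exists l; case: (hl) => h [c m]; split => //; split.
    by apply: (uniq_NoDup (p:=p)); rewrite m; exact: si_uniq si.
  split => //; split; last by rewrite Lmap_map.
  by move=> x xl; apply/inL; apply: (key v' _ l vF si).
move=> conF.
have toF x : List.In x L -> exists v', List.In v' F /\ Rch E (fun x => List.In x L) v' x.
  move=> /inL /List.in_flat_map [v' [vF /List.in_map_iff [S [<- _]]]].
  exists v'; split => //.
  case: (wfP v' S) => [[s [l [si [hs [_ [hl <-]]]]]]|[_ ->]]; last exact/Rrefl/FL.
  case: (hl) => h [c _]; apply: (list_Rch h erefl c).
  by move=> z zl; apply/inL; apply: (key v' s l vF si hs hl).
move=> x y xL yL.
have [vx [vxF rx]] := toF x xL; have [vy [vyF ry]] := toF y yL.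
have [l [h [lz [c al]]]] := conF vx vy vxF vyF.
have rF : Rch E (fun x => List.In x L) vx vy.
  by apply: (Rch_mono FL); apply: (list_Rch h lz c al).
have := Rch_trans (Rch_trans (Rch_sym (proj1 sg) rx) rF) ry.
exact: Rch_list.
Qed.
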